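(* The map $D\mapsto D^{\#}=(D^\dagger)^\ddagger$ is an automorphism of $\Psi\mathfrak D$ of order $4$.
   Context: $\Psi\mathfrak D$ is the algebra of all formal series $\sum_{m=-\infty}^{M}\sum_{k=-\infty}^{K}C_{km}x^k(d/dx)^m$ ($C_{km}\in\mathbb C$, $M,K$ depending on the series) with multiplication determined by $(d/dx)^m x^k=\sum_{j\ge0}\frac{(m)_j(k)_j}{j!}x^{k-j}(d/dx)^{m-j}$, $(a)_j=a(a-1)\cdots(a-j+1)$. The involutive antiautomorphisms $\dagger$ and $\ddagger$ are given by $\bigl(\sum C_{km}x^k(d/dx)^m\bigr)^\dagger=\sum C_{km}(-d/dx)^mx^k$ and $\bigl(\sum C_{km}x^k(d/dx)^m\bigr)^\ddagger=\sum C_{km}x^m(d/dx)^k$. *)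

(* Defs.v *)
From HB Require Import structures.
From mathcomp Require Import all_boot all_order all_algebra.
From mathcomp Require Import complex.
From mathcomp Require Import classical_sets fsbigop reals.
Set Implicit Arguments. Unset Strict Implicit. Unset Printing Implicit Defensive.
Import Order.TTheory GRing.Theory Num.Theory.
Local Open Scope ring_scope.

Definition CC (R : realType) := R[i].

(* A formal series  sum_{k,m} c k m x^k (d/dx)^m  is encoded by its
   coefficient function c : int -> int -> C  (first index: power of x,
   second index: power of d/dx). *)
Definition series (R : realType) := int -> int -> CC R.

Definition PsiD (R : realType) (c : series R) : Prop :=
  exists K M : int, forall k m : int, (K < k \/ M < m) -> c k m = 0.

Definition ffact (R : realType) (a : int) (j : nat) : CC R :=
  \prod_(i < j) (a%:~R - i%:R).

Definition sadd (R : realType) (c d : series R) : series R :=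
  fun k m => c k m + d k m.
Definition sscale (R : realType) (z : CC R) (c : series R) : series R :=
  fun k m => z * c k m.
Definition mono (R : realType) (k0 m0 : int) : series R :=
  fun k m => ((k == k0) && (m == m0))%:R.
Definition sone (R : realType) : series R := mono R 0 0.

(* Product: bilinear extension of
   (x^a d^b)(x^c d^e) = x^a (d^b x^c) d^e
     = sum_{j>=0} (b)_j (c)_j / j! x^{a+c-j} d^{b+e-j}.
   The coefficient at (k,l) collects the terms indexed by (a,b,j), with
   c = k+j-a and e = l+j-b; for elements of PsiD this is a finite sum. *)
Definition smul (R : realType) (c d : series R) : series R :=
  fun k l => \sum_(t \in [set: int * int * nat])
    (c t.1.1 t.1.2 * d (k + t.2%:Z - t.1.1) (l + t.2%:Z - t.1.2)
       * ffact R t.1.2 t.2 * ffact R (k + t.2%:Z - t.1.1) t.2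
       / (t.2`!)%:R).

(* dagger: sum C_{km} x^k d^m  |->  sum C_{km} (-d)^m x^k,
   where (-d)^m x^k = (-1)^m d^m x^k is computed with the product above. *)
Definition dagger (R : realType) (c : series R) : series R :=
  fun p q => \sum_(km \in [set: int * int])
    (c km.1 km.2 * (-1) ^ km.2 * smul (mono R 0 km.2) (mono R km.1 0) p q).

Definition ddagger (R : realType) (c : series R) : series R :=
  fun k m => c m k.

Definition sharp (R : realType) (c : series R) : series R :=
  ddagger (dagger c).

Definition is_PsiD_automorphism (R : realType) (f : series R -> series R) : Prop :=
  (forall c, PsiD c -> PsiD (f c))
  /\ (forall c d, PsiD c -> PsiD d -> f (sadd c d) = sadd (f c) (f d))
  /\ (forall (z : CC R) c, PsiD c -> f (sscale z c) = sscale z (f c))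
  /\ (forall c d, PsiD c -> PsiD d -> f (smul c d) = smul (f c) (f d))
  /\ f (sone R) = sone R
  /\ (forall c d, PsiD c -> PsiD d -> f c = f d -> c = d)
  /\ (forall d, PsiD d -> exists2 c, PsiD c & f c = d).

(* Main.v *)
Require Import Defs.
From HB Require Import structures.
From mathcomp Require Import all_boot all_order all_algebra.
From mathcomp Require Import complex.
From mathcomp Require Import classical_sets fsbigop reals.
From mathcomp Require Import boolp functions cardinality finmap.
From mathcomp Require Import zify ring lra.
Import Order.TTheory GRing.Theory Num.Theory.
Local Open Scope ring_scope.
Local Open Scope classical_set_scope.

Set Implicit Arguments. Unset Strict Implicit. Unset Printing Implicit Defensive.


Section Tool.
Variable R : realType.
Local Notation C := (CC R).

Definition fin_supp (T : Type) (F : T -> C) :=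
  exists S : set T, finite_set S /\ forall x, F x != 0 -> S x.

Lemma fsT_eq (T : choiceType) (F G : T -> C) : (forall x, F x = G x) ->
  \sum_(x \in [set: T]) F x = \sum_(x \in [set: T]) G x.
Proof. by move=> FG; apply: eq_fsbigr => x _; apply: FG. Qed.

Lemma fsT_widen (T : choiceType) (S : set T) (F : T -> C) :
  (forall x, F x != 0 -> S x) ->
  \sum_(x \in [set: T]) F x = \sum_(x \in S) F x.
Proof.
move=> HS; apply/esym/fsbig_widen => // x [_ /= nSx]; apply/eqP.
by apply: contraT => /HS.
Qed.

Lemma fsT_single (T : choiceType) (x0 : T) (F : T -> C) :
  (forall x, x != x0 -> F x = 0) -> \sum_(x \in [set: T]) F x = F x0.
Proof.
move=> H; rewrite (fsT_widen (S := [set x0])) ?fsbig_set1 // => x.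
by case: (eqVneq x x0) => [-> //| /H ->]; rewrite eqxx.
Qed.

Lemma fsT_ord (F : nat -> C) N : (forall j, (N <= j)%N -> F j = 0) ->
  \sum_(x \in [set: nat]) F x = \sum_(j < N) F j.
Proof.
move=> H; rewrite fsbig_ord (fsT_widen (S := `I_N)) // => x.
rewrite /= ltnNge; apply: contraNN => /H ->; by rewrite eqxx.
Qed.

Lemma fsT_add (T : choiceType) (F G : T -> C) : fin_supp F -> fin_supp G ->
  \sum_(x \in [set: T]) (F x + G x) =
  \sum_(x \in [set: T]) F x + \sum_(x \in [set: T]) G x.
Proof.
move=> [S1 [fS1 H1]] [S2 [fS2 H2]].
have HU : forall H : T -> C, (forall x, H x != 0 -> (S1 `|` S2) x) ->
  \sum_(x \in [set: T]) H x = \sum_(x \in S1 `|` S2) H x.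
  by move=> H HH; apply: fsT_widen.
rewrite !HU ?fsbig_split //; first by rewrite finite_setU.
- by move=> x /H2; right.
- by move=> x /H1; left.
- move=> x Hx; case: (eqVneq (F x) 0) => [F0|/H1]; last by left.
  case: (eqVneq (G x) 0) => [G0|/H2]; last by right.
  by move: Hx; rewrite F0 G0 addr0 eqxx.
Qed.

Lemma fsT_pair (I J : choiceType) (F : I * J -> C) : fin_supp F ->
  \sum_(x \in [set: I * J]) F x =
  \sum_(i \in [set: I]) \sum_(j \in [set: J]) F (i, j).
Proof.
move=> [S [fS HS]].
pose P := fst @` S; pose Q := snd @` S.
have fP : finite_set P by apply: finite_image.
have fQ : finite_set Q by apply: finite_image.
rewrite (fsT_widen (S := P `*` Q)); last first.
  by move=> x /HS Sx; split; [exists x | exists x].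
rewrite (eq_fsbigr (fun x => F (x.1, x.2))); last by case.
rewrite -(pair_fsbig _ (fun i j => F (i, j))) //.
rewrite (fsT_widen (S := P)); last first.
  move=> i; apply: contraNP => nPi; apply/eqP; apply: fsbig1 => j _.
  apply/eqP; apply: contraT => /HS Sij; case: nPi; by exists (i, j).
apply: eq_fsbigr => i _; apply/esym/fsT_widen => j /HS Sij; by exists (i, j).
Qed.

Lemma fsT_reindex (I J : choiceType) (h : I -> J) (p : pred I) (F : J -> C) :
  set_bij [set z | p z] [set: J] h ->
  \sum_(x \in [set: J]) F x =
  \sum_(z \in [set: I]) (if p z then F (h z) else 0).
Proof.
move=> hb; rewrite (reindex_fsbig h _ _ _ hb).
rewrite [RHS](fsT_widen (S := [set z | p z])); last first.
  move=> z /=; case: (p z) => //; by rewrite eqxx.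
apply: eq_fsbigr => z; rewrite in_setE /= => ->; done.
Qed.


Lemma fsT_reindex2 (I J : choiceType) (h : I -> J) (F : J -> C) :
  injective h -> (forall y, (forall x, h x != y) -> F y = 0) ->
  \sum_(x \in [set: J]) F x = \sum_(z \in [set: I]) F (h z).
Proof.
move=> hi hF; rewrite (fsT_widen (S := range h)); last first.
  move=> y Fy; apply: contrapT => ny; move: Fy; rewrite hF ?eqxx //.
  by move=> x; apply/eqP => hxy; apply: ny; exists x.
apply: reindex_fsbig; split => //; first by move=> x y _ _; apply: hi.
Qed.

Definition ff (x : C) (j : nat) : C := \prod_(i < j) (x - i%:R).

Lemma ffactCE a j : ffact R a j = ff (a%:~R) j.
Proof. by []. Qed.

Lemma ff0 x : ff x 0 = 1. Proof. by rewrite /ff big_ord0. Qed.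

Lemma ffS x j : ff x j.+1 = ff x j * (x - j%:R).
Proof. by rewrite /ff big_ord_recr. Qed.

Lemma ffSl x j : ff x j.+1 = x * ff (x - 1) j.
Proof.
rewrite /ff big_ord_recl subr0; congr (_ * _); apply: eq_bigr => i _.
by rewrite lift0 /= -addn1 natrD; ring.
Qed.

Lemma ffD x p q : ff x (p + q) = ff x p * ff (x - p%:R) q.
Proof.
elim: q => [|q IH]; first by rewrite addn0 ff0 mulr1.
by rewrite addnS !ffS IH -mulrA natrD opprD addrA.
Qed.

Lemma ff0S j : ff 0 j.+1 = 0.
Proof. by rewrite ffSl mul0r. Qed.

Definition sgn (z : int) : C := (-1) ^ z.

Lemma sgnD x y : sgn (x + y) = sgn x * sgn y.
Proof. by rewrite /sgn expfzDr // oppr_eq0 oner_eq0. Qed.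

Lemma sgnN x : sgn (- x) = sgn x.
Proof. by rewrite /sgn -exprz_inv invrN1. Qed.

Lemma sgn_nat (n : nat) : sgn n = (-1) ^+ n.
Proof. by []. Qed.

Lemma sgnK x : sgn x * sgn x = 1.
Proof. by rewrite -{2}(sgnN x) -sgnD subrr. Qed.

Lemma intr_natC (n : nat) : (n%:Z)%:~R = n%:R :> C.
Proof. by rewrite pmulrn. Qed.

Lemma mono_val k0 m0 k m :
  mono R k0 m0 k m = if (k == k0) && (m == m0) then 1 else 0.
Proof. by rewrite /mono; case: ifP. Qed.

Definition mu (b a' : int) (j : nat) : C :=
  ffact R b j * ffact R a' j / (j`!)%:R.

Definition shw (k m : int) (j : nat) : C :=
  sgn (k + j%:Z) * ffact R (k + j%:Z) j * ffact R (m + j%:Z) j / (j`!)%:R.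

Lemma smulE (c d : series R) k l : smul c d k l =
  \sum_(t \in [set: int * int * nat])
    (c t.1.1 t.1.2 * d (k + t.2%:Z - t.1.1) (l + t.2%:Z - t.1.2) *
     mu t.1.2 (k + t.2%:Z - t.1.1) t.2).
Proof. by apply: fsT_eq => t; rewrite /mu !mulrA. Qed.

Lemma smul_mono_in (m k : int) (j : nat) :
  smul (mono R 0 (k + j%:Z)) (mono R (m + j%:Z) 0) m k =
  ffact R (k + j%:Z) j * ffact R (m + j%:Z) j / (j`!)%:R.
Proof.
rewrite smulE (@fsT_single _ ((0, k + j%:Z), j)) /=.
  rewrite !mono_val !eqxx subr0 subrr !eqxx /= !mul1r /mu; done.
move=> [[a b] j'] neq /=; rewrite !mono_val.
case: (boolP ((a == 0) && (b == k + j%:Z))) => [/andP[/eqP Ea /eqP Eb]|];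
  last by rewrite !mul0r.
case: (boolP ((m + j'%:Z - a == m + j%:Z) && (k + j'%:Z - b == 0)))
  => [/andP[/eqP E1 /eqP E2]|]; last by rewrite mulr0 !mul0r.
exfalso; move: neq; rewrite Ea Eb.
have -> : j' = j by lia.
by rewrite eqxx.
Qed.

Lemma smul_mono_out (m k p q : int) :
  (forall j : nat, (m + j%:Z, k + j%:Z) != (p, q)) ->
  smul (mono R 0 q) (mono R p 0) m k = 0.
Proof.
move=> H; rewrite smulE; apply: fsbig1 => [[[a b] j']] _ /=; rewrite !mono_val.
case: (boolP ((a == 0) && (b == q))) => [/andP[/eqP Ea /eqP Eb]|];
  last by rewrite !mul0r.
case: (boolP ((m + j'%:Z - a == p) && (k + j'%:Z - b == 0)))
  => [/andP[/eqP E1 /eqP E2]|]; last by rewrite mulr0 !mul0r.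
exfalso; move: (H j'); rewrite -E1 Ea; have -> : q = k + j'%:Z by lia.
by rewrite subr0 eqxx.
Qed.

Lemma sharpE (c : series R) k m :
  sharp c k m = \sum_(j \in [set: nat]) (c (m + j%:Z) (k + j%:Z) * shw k m j).
Proof.
rewrite /sharp /ddagger /dagger.
rewrite (fsT_reindex2 (h := fun j : nat => (m + j%:Z, k + j%:Z))).
- apply: fsT_eq => j /=; rewrite smul_mono_in /shw /sgn.
  by rewrite !mulrA.
- by move=> x y [] E _; lia.
- move=> [p q] H /=; rewrite smul_mono_out ?mulr0 //.
Qed.


Lemma finite_iI (lo hi : int) : finite_set [set x : int | lo <= x <= hi].
Proof.
apply: (sub_finite_set (B := (fun n : nat => lo + n%:Z) @` `I_(`|hi - lo|.+1))).
  move=> x /= /andP [h1 h2]; exists `|x - lo|%N; rewrite /=; lia.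
exact/finite_image/finite_II.
Qed.

Lemma fin_supp_nat (F : nat -> C) N : (forall j, F j != 0 -> (j <= N)%N) ->
  fin_supp F.
Proof. by move=> H; exists `I_N.+1; split; [exact: finite_II| move=> j /H]. Qed.

Lemma PsiD_nz (c : series R) : PsiD c ->
  exists K M : int, forall a b, c a b != 0 -> a <= K /\ b <= M.
Proof.
move=> [K [M H]]; exists K, M => a b; apply: contraNP => nab.
apply/eqP/H; lia.
Qed.

Lemma mulr_neq0l (x y : C) : x * y != 0 -> x != 0.
Proof. by apply: contraNN => /eqP ->; rewrite mul0r. Qed.

Lemma mulr_neq0r (x y : C) : x * y != 0 -> y != 0.
Proof. by apply: contraNN => /eqP ->; rewrite mulr0. Qed.


Lemma sharp_PsiD (c : series R) : PsiD c -> PsiD (sharp c).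
Proof.
move=> /PsiD_nz [K [M H]]; exists M, K => k m hkm; rewrite sharpE.
apply: fsbig1 => j _; apply/eqP; apply: contraT => /mulr_neq0l /H [h1 h2].
exfalso; lia.
Qed.

Lemma sharp_fin_supp (c : series R) k m : PsiD c ->
  fin_supp (fun j : nat => c (m + j%:Z) (k + j%:Z) * shw k m j).
Proof.
move=> /PsiD_nz [K [M H]]; apply: (@fin_supp_nat _ `|K - m|) => j.
move=> /mulr_neq0l /H [h1 h2]; lia.
Qed.

Lemma sharp_add (c d : series R) : PsiD c -> PsiD d -> sharp (sadd c d) = sadd (sharp c) (sharp d).
Proof.
move=> Pc Pd; apply/funext => k; apply/funext => m.
rewrite /sadd !sharpE -fsT_add; try exact: sharp_fin_supp.
by apply: fsT_eq => j; rewrite mulrDl.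
Qed.

Lemma sharp_scale (z : C) (c : series R) : sharp (sscale z c) = sscale z (sharp c).
Proof.
apply/funext => k; apply/funext => m.
rewrite /sscale !sharpE mulr_fsumr; apply: fsT_eq => j; exact/esym/mulrA.
Qed.

Lemma fact_neq0 n : (n`!)%:R != 0 :> C.
Proof. by rewrite pnatr_eq0 -lt0n fact_gt0. Qed.

Lemma sharp_one : sharp (sone R) = sone R.
Proof.
apply/funext => k; apply/funext => m; rewrite sharpE /sone.
case: (boolP ((k == 0) && (m == 0))) => [/andP [/eqP -> /eqP ->]|nkm].
  rewrite (@fsT_single _ 0%N) ?mono_val /= ?eqxx /shw /=.
    by rewrite !add0r /sgn expr0z /ffact !big_ord0 /= !mul1r invr1.
  move=> j nj; rewrite mono_val !add0r.
  case: (boolP ((j%:Z == 0) && (j%:Z == 0))) => [/andP [/eqP hj _]|];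
    last by rewrite mul0r.
  by exfalso; move: nj; rewrite -[j]/(`|j%:Z|%N) hj.
rewrite mono_val (negbTE nkm); apply: fsbig1 => j _; rewrite mono_val.
case: (boolP ((m + j%:Z == 0) && (k + j%:Z == 0))) => [/andP [/eqP hm /eqP hk]|];
  last by rewrite mul0r.
case: j hm hk => [|j] hm hk.
  by exfalso; move: nkm; rewrite !addr0 in hm hk; rewrite hm hk eqxx.
by rewrite /shw hm hk !ffactCE mulr0z ff0S !(mulr0, mul0r).
Qed.


Lemma binCE n j : (j <= n)%N ->
  ('C(n, j))%:R = (n`!)%:R / ((j`!)%:R * ((n - j)`!)%:R) :> C.
Proof.
move/bin_fact => h; rewrite -h !natrM mulfK //.
by rewrite mulf_neq0 // fact_neq0.
Qed.

Lemma sum_alt n : \sum_(j < n.+1) (-1) ^+ j * ('C(n, j))%:R = (n == 0)%:R :> C.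
Proof.
have := exprBn (1 : C) 1 n; rewrite subrr expr0n => ->.
by apply: eq_bigr => j _; rewrite !expr1n !mulr1 mulr_natr.
Qed.

Lemma intrDn (m : int) (n : nat) : (m + n%:Z)%:~R = m%:~R + n%:R :> C.
Proof. by rewrite intrD intr_natC. Qed.

Lemma sharp2_coef k m n :
  \sum_(j < n.+1) (shw (m + j%:Z) (k + j%:Z) (n - j) * shw k m j) =
  (n == 0)%:R * sgn (k + m).
Proof.
have E : forall j : 'I_n.+1, shw (m + j%:Z) (k + j%:Z) (n - j) * shw k m j =
  (sgn (m + n%:Z) * sgn k * ff (m%:~R + n%:R) n * ff (k%:~R + n%:R) n / (n`!)%:R)
  * ((-1) ^+ j * ('C(n, j))%:R).
  move=> [j /= hj]; rewrite ltnS in hj.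
  have e1 : forall z : int, z + j%:Z + (n - j)%N%:Z = z + n%:Z by move=> z; lia.
  rewrite /shw !e1 !ffactCE !intrDn.
  have e2 : forall x : C, ff (x + n%:R) (n - j) * ff (x + j%:R) j = ff (x + n%:R) n.
    move=> x; have -> : ff (x + n%:R) n = ff (x + n%:R) ((n - j) + j) by rewrite subnK.
    rewrite ffD natrB //; congr (_ * ff _ _).
    ring.
  rewrite (binCE hj) !sgnD !sgn_nat.
  rewrite -[in RHS](e2 (m%:~R)) -[in RHS](e2 (k%:~R)).
  field; rewrite ?fact_neq0 ?mulf_neq0 ?fact_neq0 //.
rewrite (eq_bigr _ (fun j _ => E j)) -mulr_sumr sum_alt.
case: n {E} => [|n]; last by rewrite !mulr0 mul0r.
rewrite !ff0 !addr0 !mulr1 mul1r /= invr1 mulr1 -sgnD addrC.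
done.
Qed.


Lemma sharp2 (c : series R) : PsiD c ->
  forall k m, sharp (sharp c) k m = sgn (k + m) * c k m.
Proof.
move=> Pc k m; have [K [M H]] := PsiD_nz Pc.
pose G (x : nat * nat) := c (k + x.1%:Z + x.2%:Z) (m + x.1%:Z + x.2%:Z) *
   shw (m + x.1%:Z) (k + x.1%:Z) x.2 * shw k m x.1.
have step1 : sharp (sharp c) k m = \sum_(x \in [set: nat * nat]) G x.
  rewrite fsT_pair; last first.
    exists (`I_(`|K - k|.+1) `*` `I_(`|K - k|.+1)); split.
      by apply: finite_setX; apply: finite_II.
    move=> [j i]; rewrite /G /= => /mulr_neq0l /mulr_neq0l /H [h1 h2] /=; split; lia.
  rewrite sharpE; apply: fsT_eq => j; rewrite sharpE mulr_fsuml.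
  by apply: fsT_eq => i.
rewrite step1 (@fsT_reindex _ _ (fun x : nat * nat => (x.2, x.1 - x.2)%N)
  (fun x => (x.2 <= x.1)%N)); last first.
  split.
  - by [].
  - move=> [n j] [n' j']; rewrite !in_setE /= => h1 h2 [e1 e2]; congr pair; lia.
  - move=> [j i] _; exists (i + j, j)%N; rewrite /=; [by rewrite leq_addl|].
    by rewrite addnK.
rewrite fsT_pair; last first.
  exists (`I_(`|K - k|.+1) `*` `I_(`|K - k|.+1)); split.
    by apply: finite_setX; apply: finite_II.
  move=> [n j] /=; case: ifP => [hj|]; last by rewrite eqxx.
  rewrite /G /= => /mulr_neq0l /mulr_neq0l /H [h1 h2] /=; lia.
etransitivity; first (apply: (@fsT_single _ 0%N) => n nn).
   rewrite (@fsT_ord _ n.+1); last by move=> j hj; rewrite leqNgt hj.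
  have e : forall j : 'I_n.+1, (if (j <= n)%N then G (j : nat, n - j)%N else 0) =
     c (k + n%:Z) (m + n%:Z) * (shw (m + j%:Z) (k + j%:Z) (n - j) * shw k m j).
    move=> [j /= hj]; rewrite ltnS in hj; rewrite hj /G /=.
    have e1 : forall z : int, z + j%:Z + (n - j)%N%:Z = z + n%:Z by move=> z; lia.
    by rewrite !e1 mulrA.
  rewrite (eq_bigr _ (fun j _ => e j)) -mulr_sumr sharp2_coef.
  by rewrite (negbTE nn) mul0r mulr0.
rewrite (@fsT_ord _ 1); last by move=> j hj /=; rewrite leqNgt hj.
rewrite big_ord1 /= /G /= !addr0 /shw /= !addr0 /ffact !big_ord0 /= !mulr1.
by rewrite subnn fact0 invr1 !mulr1 sgnD; ring.
Qed.

End Tool.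


Section Ident.
Variable R : realType.
Local Notation C := (CC R).
Local Notation ff := (@ff R).

Lemma pascal_sum (g : nat -> C) n :
  \sum_(j < n.+2) ('C(n.+1, j))%:R * g j =
  \sum_(j < n.+1) ('C(n, j))%:R * g j + \sum_(j < n.+1) ('C(n, j))%:R * g j.+1.
Proof.
rewrite big_ord_recl bin0.
have e : forall j : 'I_n.+1, ('C(n.+1, lift ord0 j))%:R * g (lift ord0 j) =
  ('C(n, j.+1))%:R * g j.+1 + ('C(n, j))%:R * g j.+1.
  by move=> j; rewrite lift0 binS natrD mulrDl.
rewrite (eq_bigr _ (fun j _ => e j)).
rewrite big_split /= addrA; congr (_ + _).
rewrite [in RHS]big_ord_recl bin0 [in LHS]addrC big_ord_recr /= bin_small //.
by rewrite mul0r addr0 addrC; congr (_ + _); apply: eq_bigr => j _; rewrite /bump /= add1n.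
Qed.

Lemma vandermonde x y n :
  ff (x + y) n = \sum_(r < n.+1) ('C(n, r))%:R * (ff x r * ff y (n - r)).
Proof.
elim: n x y => [|n IH] x y.
  by rewrite big_ord1 !ff0 bin0 !mul1r.
rewrite (pascal_sum (fun r => ff x r * ff y (n.+1 - r))) ffSl.
have e1 : forall j : 'I_n.+1, ('C(n, j))%:R * (ff x j * ff y (n.+1 - j)) =
   y * (('C(n, j))%:R * (ff x j * ff (y - 1) (n - j))).
  move=> [j /= hj]; rewrite subSn // ffSl; ring.
have e2 : forall j : 'I_n.+1, ('C(n, j))%:R * (ff x j.+1 * ff y (n.+1 - j.+1)) =
   x * (('C(n, j))%:R * (ff (x - 1) j * ff y (n - j))).
  move=> [j /= hj]; rewrite subSS ffSl; ring.
rewrite (eq_bigr _ (fun j _ => e1 j)) (eq_bigr _ (fun j _ => e2 j)).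
rewrite -!mulr_sumr -!IH.
have -> : x + y - 1 = x + (y - 1) by ring.
have -> : x - 1 + y = x + (y - 1) by ring.
ring.
Qed.

Lemma vandermondeN x y n :
  ff (x - y) n = \sum_(j < n.+1)
     ('C(n, j))%:R * ((-1) ^+ j * ff y j * ff (x - j%:R) (n - j)).
Proof.
elim: n x y => [|n IH] x y.
  by rewrite big_ord1 !ff0 bin0 expr0 !mul1r.
rewrite (pascal_sum (fun j => (-1) ^+ j * ff y j * ff (x - j%:R) (n.+1 - j))) ffS.
have e1 : forall j : 'I_n.+1,
   ('C(n, j))%:R * ((-1) ^+ j * ff y j * ff (x - j%:R) (n.+1 - j)) =
   (x - n%:R) * (('C(n, j))%:R * ((-1) ^+ j * ff y j * ff (x - j%:R) (n - j))).
  move=> [j /= hj]; rewrite subSn // ffS natrB //; ring.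
have e2 : forall j : 'I_n.+1,
   ('C(n, j))%:R * ((-1) ^+ j.+1 * ff y j.+1 * ff (x - j.+1%:R) (n.+1 - j.+1)) =
   - y * (('C(n, j))%:R * ((-1) ^+ j * ff (y - 1) j * ff ((x - 1) - j%:R) (n - j))).
  move=> [j /= hj]; rewrite subSS ffSl exprS -addn1 natrD.
  have -> : x - (j%:R + 1) = x - 1 - j%:R by ring.
  ring.
rewrite (eq_bigr _ (fun j _ => e1 j)) (eq_bigr _ (fun j _ => e2 j)).
rewrite -!mulr_sumr -!IH.
have -> : x - 1 - (y - 1) = x - y by ring.
ring.
Qed.


Lemma tri_exchange (F : nat -> nat -> C) n :
  \sum_(j < n.+1) \sum_(r < (n - j).+1) F j r =
  \sum_(r < n.+1) \sum_(j < (n - r).+1) F j r.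
Proof.
have E : forall (G : nat -> nat -> C), \sum_(j < n.+1) \sum_(r < (n - j).+1) G j r
   = \sum_(j < n.+1) \sum_(r < n.+1) (if (j + r <= n)%N then G j r else 0).
  move=> G; apply: eq_bigr => [[j hj]] _ /=.
  rewrite (big_ord_widen n.+1 (fun r => G j r)) ?ltnS ?leq_subr // big_mkcond.
  apply: eq_bigr => [[r hr]] _ /=; congr (if _ then _ else _).
  by apply/idP/idP => h; lia.
rewrite E exchange_big (E (fun r j => F j r)) /=.
by apply: eq_bigr => r _; apply: eq_bigr => j _; rewrite addnC.
Qed.

Definition Zs (A B A' B' : C) n := \sum_(r < n.+1)
  ff A r * ff A' (n - r) * ff (B + B' - (n - r)%:R) r * ff B' (n - r) /
  ((r`!)%:R * ((n - r)`!)%:R).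

Definition XRs (A B A' B' : C) n := \sum_(tt < n.+1) \sum_(r < tt.+1)
  (ff B r * ff A r / (r`!)%:R * (ff B' (n - tt) * ff A' (n - tt) / ((n - tt)`!)%:R) *
   (ff (A - r%:R) (tt - r) * ff (B' - (n - tt)%:R) (tt - r) / ((tt - r)`!)%:R)).

Definition XLs (A B A' B' : C) n := \sum_(i < n.+1)
  (ff B (n - i) * ff A' (n - i) / ((n - i)`!)%:R *
   ((-1) ^+ (n - i) * ff (B + B' - (n - i)%:R) i * ff (A + A' - (n - i)%:R) i /
     (i`!)%:R)).

Lemma XRs_Zs A B A' B' n : XRs A B A' B' n = Zs A B A' B' n.
Proof.
apply: eq_bigr => [[tt htt]] _ /=; rewrite ltnS in htt.
have e : forall r : 'I_tt.+1,
  ff B r * ff A r / (r`!)%:R * (ff B' (n - tt) * ff A' (n - tt) / ((n - tt)`!)%:R) *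
   (ff (A - r%:R) (tt - r) * ff (B' - (n - tt)%:R) (tt - r) / ((tt - r)`!)%:R) =
  (ff A tt * ff A' (n - tt) * ff B' (n - tt) / ((tt`!)%:R * ((n - tt)`!)%:R)) *
  (('C(tt, r))%:R * (ff B r * ff (B' - (n - tt)%:R) (tt - r))).
  move=> [r /= hr]; rewrite ltnS in hr; rewrite (binCE R hr).
  have -> : ff A tt = ff A r * ff (A - r%:R) (tt - r) by rewrite -ffD subnKC.
  by field; rewrite ?mulf_neq0 ?fact_neq0.
rewrite (eq_bigr _ (fun r _ => e r)) -mulr_sumr -vandermonde.
have -> : B + (B' - (n - tt)%:R) = B + B' - (n - tt)%:R by ring.
by field; rewrite ?mulf_neq0 ?fact_neq0.
Qed.


Lemma XLs_Zs A B A' B' n : XLs A B A' B' n = Zs A B A' B' n.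
Proof.
pose W (j r : nat) := (-1) ^+ j * ff B j * ff (B + B' - j%:R) (n - j) / (j`!)%:R *
   (ff A r * ff A' (n - r) / ((r`!)%:R * ((n - j - r)`!)%:R)).
have step1 : XLs A B A' B' n = \sum_(j < n.+1) \sum_(r < (n - j).+1) W j r.
  rewrite /XLs (reindex_inj rev_ord_inj) /=.
  apply: eq_bigr => [[j hj]] _ /=; rewrite ltnS in hj; rewrite subSS subKn //.
  have -> : A + A' - j%:R = A + (A' - j%:R) by ring.
  set P := ff (A + (A' - j%:R)) (n - j).
  have -> : ff B j * ff A' j / j`!%:R *
    ((-1) ^+ j * ff (B + B' - j%:R) (n - j) * P / (n - j)`!%:R) =
    (ff B j * ff A' j / j`!%:R * (-1) ^+ j * ff (B + B' - j%:R) (n - j) / (n - j)`!%:R) * P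
    by ring.
  rewrite /P (vandermonde A (A' - j%:R)) mulr_sumr; apply: eq_bigr => [[r hr]] _ /=.
  rewrite ltnS in hr; rewrite (binCE R hr) /W.
  have -> : ff A' (n - r) = ff A' j * ff (A' - j%:R) (n - j - r).
    rewrite -ffD; congr (ff _ _); lia.
  by field; rewrite ?mulf_neq0 ?fact_neq0.
rewrite step1 tri_exchange; apply: eq_bigr => [[r hr]] _ /=; rewrite ltnS in hr.
have e : forall j : 'I_(n - r).+1, W j r =
   (ff A r * ff A' (n - r) * ff (B + B' - (n - r)%:R) r / ((r`!)%:R * ((n - r)`!)%:R))
   * (('C(n - r, j))%:R * ((-1) ^+ j * ff B j * ff (B + B' - j%:R) (n - r - j))).
  move=> [j /= hj]; rewrite ltnS in hj; rewrite (binCE R hj) /W.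
  have -> : ff (B + B' - j%:R) (n - j) =
      ff (B + B' - j%:R) (n - r - j) * ff (B + B' - (n - r)%:R) r.
    rewrite [in LHS](_ : (n - j = (n - r - j) + r)%N); last by lia.
    rewrite ffD; congr (_ * ff _ _); rewrite (natrB _ hj) (natrB _ hr); ring.
  have -> : (n - j - r = n - r - j)%N by lia.
  by field; rewrite ?mulf_neq0 ?fact_neq0.
rewrite (eq_bigr _ (fun j _ => e j)) -mulr_sumr -vandermondeN.
have -> : B + B' - B = B' by ring.
by field; rewrite ?mulf_neq0 ?fact_neq0.
Qed.

Lemma XLs_XRs A B A' B' n : XLs A B A' B' n = XRs A B A' B' n.
Proof. by rewrite XLs_Zs XRs_Zs. Qed.

End Ident.


Section Main.
Variable R : realType.
Local Notation C := (CC R).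
Local Notation ff := (@ff R).
Local Notation mu := (@mu R).
Local Notation shw := (@shw R).
Local Notation sgn := (@sgn R).

Definition XL (k m a b : int) (n : nat) : C :=
  \sum_(i < n.+1) mu b (m + n%:Z - a) (n - i) * shw k m i.

Definition XR (k m a b : int) (n : nat) : C :=
  \sum_(tt < n.+1) \sum_(r < tt.+1)
    (shw (b - r%:Z) (a - r%:Z) r * shw (k + tt%:Z - b) (m + tt%:Z - a) (n - tt) *
     mu (a - r%:Z) (k + tt%:Z - b) (tt - r)).

Lemma XL_XR k m a b n : XL k m a b n = XR k m a b n.
Proof.
set A : C := a%:~R; set B : C := b%:~R.
set A' : C := (m + n%:Z - a)%:~R; set B' : C := (k + n%:Z - b)%:~R.
have hL : XL k m a b n = sgn b * sgn (k + n%:Z - b) * XLs A B A' B' n.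
  rewrite /XL /XLs mulr_sumr; apply: eq_bigr => [[i hi]] _ /=; rewrite ltnS in hi.
  rewrite /mu /shw !ffactCE.
  have e1 : (k + i%:Z)%:~R = B + B' - (n - i)%:R :> C.
    by rewrite /B /B' (natrB _ hi) !(intrD, intrN, intr_natC); ring.
  have e2 : (m + i%:Z)%:~R = A + A' - (n - i)%:R :> C.
    by rewrite /A /A' (natrB _ hi) !(intrD, intrN, intr_natC); ring.
  have e3 : sgn (k + i%:Z) = sgn b * sgn (k + n%:Z - b) * (-1) ^+ (n - i).
    rewrite -sgnD -sgn_nat -(@sgnN R (n - i)%N) -sgnD; congr (sgn _); lia.
  by rewrite e1 e2 e3; ring.
have hR : XR k m a b n = sgn b * sgn (k + n%:Z - b) * XRs A B A' B' n.
  rewrite /XR /XRs mulr_sumr; apply: eq_bigr => [[tt htt]] _ /=; rewrite ltnS in htt.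
  rewrite mulr_sumr; apply: eq_bigr => [[r hr]] _ /=; rewrite ltnS in hr.
  rewrite /mu /shw !ffactCE.
  have e1 : b - r%:Z + r%:Z = b by ring.
  have e2 : a - r%:Z + r%:Z = a by ring.
  have e3 : k + tt%:Z - b + (n - tt)%N%:Z = k + n%:Z - b by lia.
  have e4 : m + tt%:Z - a + (n - tt)%N%:Z = m + n%:Z - a by lia.
  have e5 : (a - r%:Z)%:~R = A - r%:R :> C by rewrite /A !(intrD, intrN, intr_natC).
  have e6 : (k + tt%:Z - b)%:~R = B' - (n - tt)%:R :> C.
    by rewrite /B' (natrB _ htt) !(intrD, intrN, intr_natC); ring.
  rewrite e1 e2 e3 e4 e5 e6 -/A -/B -/A' -/B'; ring.
by rewrite hL hR XLs_XRs.
Qed.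


Lemma sharp_smul_L (c d : series R) : PsiD c -> PsiD d -> forall k m,
  sharp (smul c d) k m = \sum_(w \in [set: (int * int) * nat])
    (c w.1.1 w.1.2 * d (m + w.2%:Z - w.1.1) (k + w.2%:Z - w.1.2) *
     XL k m w.1.1 w.1.2 w.2).
Proof.
move=> Pc Pd k m.
have [K1 [M1 H1]] := PsiD_nz Pc; have [K2 [M2 H2]] := PsiD_nz Pd.
pose N := (absz (K1 + K2 - m)%R + absz (M1 + M2 - k)%R).+1.
pose Ia := [set a : int | m - K2 <= a <= K1].
pose Ib := [set b : int | k - M2 <= b <= M1].
have fIa : finite_set Ia by apply: finite_iI.
have fIb : finite_set Ib by apply: finite_iI.
pose G (x : nat * ((int * int) * nat)) :=
  c x.2.1.1 x.2.1.2 * d (m + x.1%:Z + x.2.2%:Z - x.2.1.1)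
    (k + x.1%:Z + x.2.2%:Z - x.2.1.2) *
  mu x.2.1.2 (m + x.1%:Z + x.2.2%:Z - x.2.1.1) x.2.2 * shw k m x.1.
have step1 : sharp (smul c d) k m = \sum_(x \in [set: nat * ((int * int) * nat)]) G x.
  rewrite fsT_pair; last first.
    exists (`I_N `*` ((Ia `*` Ib) `*` `I_N)); split.
      by apply: finite_setX; [apply: finite_II| apply: finite_setX;
        [apply: finite_setX | apply: finite_II]].
    move=> [i [[a b] j]]; rewrite /G /= => /mulr_neq0l /mulr_neq0l.
    move=> /[dup] /mulr_neq0l /H1 [h1 h2] /mulr_neq0r /H2 [h3 h4].
    rewrite /Ia /Ib /=; lia.
  rewrite sharpE; apply: fsT_eq => i; rewrite smulE mulr_fsuml.
  by apply: fsT_eq => t.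
rewrite step1 (@fsT_reindex _ _ _ (fun z : ((int * int) * nat) * nat => (z.2, (z.1.1, z.1.2 - z.2)%N))
  (fun z => (z.2 <= z.1.2)%N)); last first.
  split.
  - by [].
  - move=> [[ab n] i] [[ab' n'] i']; rewrite !in_setE /= => h h' [e1 e2 e3].
    by rewrite e2; congr (_, _, _); lia.
  - move=> [i [ab j]] _; exists ((ab, i + j), i)%N; rewrite /=; [by rewrite leq_addr|].
    by rewrite addKn.
rewrite fsT_pair; last first.
  exists (((Ia `*` Ib) `*` `I_N) `*` `I_N); split.
    by apply: finite_setX; [apply: finite_setX; [apply: finite_setX|apply: finite_II]
      | apply: finite_II].
  move=> [[[a b] n] i] /=; case: ifP => [hi|]; last by rewrite eqxx.
  rewrite /G /= => /mulr_neq0l /mulr_neq0l.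
  move=> /[dup] /mulr_neq0l /H1 [h1 h2] /mulr_neq0r /H2 [h3 h4].
  rewrite /Ia /Ib /=; lia.
apply: fsT_eq => [[[a b] n]] /=.
etransitivity; first apply: (@fsT_ord _ _ n.+1).
  by move=> j hj /=; rewrite leqNgt hj.
rewrite /XL mulr_sumr; apply: eq_bigr => [[i hi]] _ /=; rewrite ltnS in hi.
rewrite hi /G /=.
have e1 : m + i%:Z + (n - i)%N%:Z - a = m + n%:Z - a by lia.
have e2 : k + i%:Z + (n - i)%N%:Z - b = k + n%:Z - b by lia.
rewrite e1 e2; ring.
Qed.


Lemma smul_sharp_R (c d : series R) : PsiD c -> PsiD d -> forall k m,
  smul (sharp c) (sharp d) k m = \sum_(w \in [set: (int * int) * nat])
    (c w.1.1 w.1.2 * d (m + w.2%:Z - w.1.1) (k + w.2%:Z - w.1.2) *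
     XR k m w.1.1 w.1.2 w.2).
Proof.
move=> Pc Pd k m.
have [K1 [M1 H1]] := PsiD_nz Pc; have [K2 [M2 H2]] := PsiD_nz Pd.
pose N := (absz (K1 + K2 - m)%R + absz (M1 + M2 - k)%R).+1.
pose Ia := [set a : int | m - K2 <= a <= K1].
pose Ib := [set b : int | k - M2 <= b <= M1].
have fIa : finite_set Ia by apply: finite_iI.
have fIb : finite_set Ib by apply: finite_iI.
pose H (x : ((int * int) * nat) * (nat * nat)) :=
  c (x.1.1.2 + x.2.1%:Z) (x.1.1.1 + x.2.1%:Z) * shw x.1.1.1 x.1.1.2 x.2.1 *
  (d (m + x.1.2%:Z - x.1.1.2 + x.2.2%:Z) (k + x.1.2%:Z - x.1.1.1 + x.2.2%:Z) *
   shw (k + x.1.2%:Z - x.1.1.1) (m + x.1.2%:Z - x.1.1.2) x.2.2) *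
  mu x.1.1.2 (k + x.1.2%:Z - x.1.1.1) x.1.2.
have step1 : smul (sharp c) (sharp d) k m =
    \sum_(x \in [set: ((int * int) * nat) * (nat * nat)]) H x.
  rewrite fsT_pair; last first.
    exists (((Ib `*` Ia) `*` `I_N) `*` (`I_N `*` `I_N)); split.
      by apply: finite_setX; [apply: finite_setX; [apply: finite_setX|apply: finite_II]
        | apply: finite_setX; apply: finite_II].
    move=> [[[u v] j] [r s]]; rewrite /H /= => /mulr_neq0l.
    move=> /[dup] /mulr_neq0l /mulr_neq0l /H1 [h1 h2] /mulr_neq0r /mulr_neq0l /H2 [h3 h4].
    rewrite /Ia /Ib /=; lia.
  rewrite smulE; apply: fsT_eq => [[[u v] j]] /=.
  rewrite fsT_pair; last first.
    have [K [M H']] := PsiD_nz Pc.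
    exists (`I_(absz (K - v)%R).+1 `*` `I_(absz (K2 - (m + j%:Z - v))%R).+1); split.
      by apply: finite_setX; apply: finite_II.
    move=> [r s]; rewrite /H /= => /mulr_neq0l.
    move=> /[dup] /mulr_neq0l /mulr_neq0l /H' [h1 h2] /mulr_neq0r /mulr_neq0l /H2 [h3 h4].
    rewrite /=; lia.
  rewrite !sharpE mulr_fsuml mulr_fsuml; apply: fsT_eq => r.
  rewrite mulr_fsumr mulr_fsuml; apply: fsT_eq => s.
  by rewrite /H /= mulrA.
rewrite step1.
rewrite (@fsT_reindex _ _ _
  (fun z : ((int * int) * nat) * (nat * nat) =>
     (((z.1.1.2 - z.2.2%:Z, z.1.1.1 - z.2.2%:Z), (z.2.1 - z.2.2)%N), (z.2.2, (z.1.2 - z.2.1)%N)))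
  (fun z => (z.2.2 <= z.2.1)%N && (z.2.1 <= z.1.2)%N)); last first.
  split.
  - by [].
  - move=> [[[a b] n] [tt r]] [[[a' b'] n'] [tt' r']]; rewrite !in_setE /=.
    move=> /andP [h1 h2] /andP [h3 h4] [e1 e2 e3 e4 e5].
    congr (_, _, _, (_, _)); lia.
  - move=> [[[u v] j] [r s]] _.
    exists (((v + r%:Z, u + r%:Z), (r + j + s)%N), ((r + j)%N, r)).
      by rewrite /=; apply/andP; split; lia.
    rewrite /=; congr (_, _, _, (_, _)); lia.
rewrite fsT_pair; last first.
  exists (((Ia `*` Ib) `*` `I_N) `*` (`I_N `*` `I_N)); split.
    by apply: finite_setX; [apply: finite_setX; [apply: finite_setX|apply: finite_II]
      | apply: finite_setX; apply: finite_II].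
  move=> [[[a b] n] [tt r]] /=; case: ifP => [/andP [hr htt]|]; last by rewrite eqxx.
  rewrite /H /= => /mulr_neq0l.
  move=> /[dup] /mulr_neq0l /mulr_neq0l /H1 [h1 h2] /mulr_neq0r /mulr_neq0l /H2 [h3 h4].
  rewrite /Ia /Ib /=; lia.
apply: fsT_eq => [[[a b] n]] /=.
rewrite fsT_pair; last first.
  exists (`I_n.+1 `*` `I_n.+1); split.
    by apply: finite_setX; apply: finite_II.
  move=> [tt r] /=; case: ifP => [/andP [hr htt]|]; last by rewrite eqxx.
  move=> _; rewrite /=; lia.
etransitivity; first apply: (@fsT_ord _ _ n.+1).
  move=> tt htt; apply: fsbig1 => r _ /=.
  by rewrite (leqNgt tt n) htt andbF.
rewrite /XR mulr_sumr; apply: eq_bigr => [[tt htt]] _ /=; rewrite ltnS in htt.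
etransitivity; first apply: (@fsT_ord _ _ tt.+1).
  by move=> r hr /=; rewrite (leqNgt r tt) hr.
rewrite mulr_sumr; apply: eq_bigr => [[r hr]] _ /=; rewrite ltnS in hr.
rewrite hr htt /H /=.
have e1 : a - r%:Z + r%:Z = a by lia.
have e2 : b - r%:Z + r%:Z = b by lia.
have e3 : m + (tt - r)%N%:Z - (a - r%:Z) + (n - tt)%N%:Z = m + n%:Z - a by lia.
have e4 : k + (tt - r)%N%:Z - (b - r%:Z) + (n - tt)%N%:Z = k + n%:Z - b by lia.
have e5 : k + (tt - r)%N%:Z - (b - r%:Z) = k + tt%:Z - b by lia.
have e6 : m + (tt - r)%N%:Z - (a - r%:Z) = m + tt%:Z - a by lia.
rewrite e1 e2 e3 e4 e5 e6; ring.
Qed.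

Lemma sharp_mul (c d : series R) : PsiD c -> PsiD d ->
  sharp (smul c d) = smul (sharp c) (sharp d).
Proof.
move=> Pc Pd; apply/funext => k; apply/funext => m.
rewrite sharp_smul_L // smul_sharp_R //; apply: fsT_eq => w.
by rewrite XL_XR.
Qed.

End Main.


Section Fin.
Variable R : realType.
Local Notation C := (CC R).

Lemma sharp4 (c : series R) : PsiD c -> iter 4 (@sharp R) c = c.
Proof.
move=> Pc; rewrite /=.
have P2 : PsiD (sharp (sharp c)) by do 2 apply: sharp_PsiD.
apply/funext => k; apply/funext => m.
by rewrite sharp2 // sharp2 // mulrA sgnK mul1r.
Qed.

Lemma sharp_10 (e : series R) : (forall j : nat, e j%:Z (1 + j%:Z) = 0) ->
  sharp e 1 0 = 0.
Proof.
move=> H; rewrite sharpE; apply: fsbig1 => j _.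
by rewrite add0r H mul0r.
Qed.

Lemma mono10_PsiD : PsiD (mono R 1 0).
Proof.
exists 1, 0 => k m h; rewrite mono_val.
case: (boolP ((k == 1) && (m == 0))) => // /andP [/eqP hk /eqP hm].
exfalso; lia.
Qed.

Lemma mono10_zero (j : nat) : mono R 1 0 j%:Z (1 + j%:Z) = 0.
Proof.
rewrite mono_val; case: (boolP ((j%:Z == 1) && (1 + j%:Z == 0))) => //.
move=> /andP [/eqP h1 /eqP h2]; exfalso; lia.
Qed.

End Fin.

Local Close Scope classical_set_scope.

Theorem lemma2p4 (R : realType) :
  is_PsiD_automorphism (@sharp R)
  /\ (forall c : series R, PsiD c -> iter 4 (@sharp R) c = c)
  /\ (forall n : nat, (0 < n < 4)%N ->
        exists2 c : series R, PsiD c & iter n (@sharp R) c <> c).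
Proof.
have S4 := @sharp4 R.
split; [|split].
- split; first exact: sharp_PsiD.
  split; first exact: sharp_add.
  split; first by move=> z c _; apply: sharp_scale.
  split; first exact: sharp_mul.
  split; first exact: sharp_one.
  split.
    move=> c d Pc Pd E; rewrite -(S4 c Pc) -(S4 d Pd) /=.
    by move: E; rewrite /= => ->.
  move=> d Pd; exists (iter 3 (@sharp R) d).
    by rewrite /=; do 3 apply: sharp_PsiD.
  by rewrite -[RHS](S4 d Pd).
- exact: S4.
- move=> n hn; exists (mono R 1 0); first exact: mono10_PsiD.
  have v1 : mono R 1 0 1 0 = 1 by rewrite mono_val !eqxx.
  have P := @mono10_PsiD R.
  case: n hn => [|[|[|[|n]]]] // _ /= E.
  + move: (congr1 (fun f => f 1 0) E) => /=.
    rewrite sharp_10 ?v1; last exact: mono10_zero.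
    by move/eqP; rewrite eq_sym oner_eq0.
  + move: (congr1 (fun f => f 1 0) E) => /=.
    rewrite sharp2 // v1 mulr1 /sgn expr1z => /eqP.
    by rewrite -subr_eq0 -opprD oppr_eq0 -mulr2n pnatr_eq0.
  + move: (congr1 (fun f => f 1 0) E) => /=.
    rewrite sharp_10 ?v1; first by move/eqP; rewrite eq_sym oner_eq0.
    move=> j; rewrite sharp2 //; by rewrite mono10_zero mulr0.
Qed.
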